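(* Let $(X,f)$ be a dynamical system. Suppose there are $\varepsilon>0$ and a dense Mycielski set $S\subset X$ such that (i) $S\times S\subset\mathrm{SProx}(f)$, and (ii) for every nonempty open $W\subset X$ there is a Cantor set $C\subset S\cap W$ which is syndetically $3\varepsilon$-scrambled for $f$. Then $f$ has a dense Mycielski syndetically $\varepsilon$-scrambled set $T$ with $T\subset S$.
   Context: Dynamical system: compact metric space $X$ with metric $d$ and continuous $f$. Syndetic: subset of $\mathbb N$ meeting every set with arbitrarily long runs of consecutive integers. $\mathrm{Asy}(f)=\{(x,y):d(f^nx,f^ny)\to0\}$, $\mathrm{SProx}(f)=\{(x,y):\{n:d(f^nx,f^ny)<\eta\}$ syndetic for all $\eta>0\}$. A set with at least two points is syndetically $\delta$-scrambled if every pair of distinct points $x,y$ in it lies in $\mathrm{SProx}(f)\setminus\mathrm{Asy}(f)$ and satisfies $\limsup_n d(f^nx,f^ny)\ge\delta$. Cantor set: nonempty compact perfect totally disconnected; Mycielski set: countable union of Cantor sets. *)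

(* Defs.v *)
From Stdlib Require Import Reals List.
Open Scope R_scope.

Section Defs.
Variable X : Type.
Variable d : X -> X -> R.

Definition is_metric : Prop :=
  (forall x y, 0 <= d x y) /\
  (forall x y, d x y = 0 <-> x = y) /\
  (forall x y, d x y = d y x) /\
  (forall x y z, d x z <= d x y + d y z).

Definition is_open (U : X -> Prop) : Prop :=
  forall x, U x -> exists r, r > 0 /\ forall y, d x y < r -> U y.

Definition compact_set (K : X -> Prop) : Prop :=
  forall (I : Type) (U : I -> X -> Prop),
    (forall i, is_open (U i)) ->
    (forall x, K x -> exists i, U i x) ->
    exists l : list I, forall x, K x -> exists i, In i l /\ U i x.

Definition compact_space : Prop := compact_set (fun _ => True).

Definition dense (S : X -> Prop) : Prop :=
  forall W, is_open W -> (exists x, W x) -> exists x, W x /\ S x.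

Definition connected_set (A : X -> Prop) : Prop :=
  ~ exists U V, is_open U /\ is_open V /\
      (forall x, A x -> U x \/ V x) /\
      (exists x, A x /\ U x) /\ (exists x, A x /\ V x) /\
      (forall x, A x -> U x -> V x -> False).

Definition totally_disconnected (K : X -> Prop) : Prop :=
  forall A, (forall x, A x -> K x) -> connected_set A ->
    forall x y, A x -> A y -> x = y.

(* no isolated points (closedness follows from compactness) *)
Definition perfect_set (K : X -> Prop) : Prop :=
  forall x, K x -> forall r, r > 0 -> exists y, K y /\ y <> x /\ d x y < r.

Definition cantor_set (K : X -> Prop) : Prop :=
  (exists x, K x) /\ compact_set K /\ perfect_set K /\ totally_disconnected K.

Definition mycielski_set (S : X -> Prop) : Prop :=
  exists C : nat -> X -> Prop,
    (forall n, cantor_set (C n)) /\ (forall x, S x <-> exists n, C n x).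

Variable f : X -> X.

Definition continuous_map : Prop :=
  forall x eps, eps > 0 -> exists delta, delta > 0 /\
    forall y, d x y < delta -> d (f x) (f y) < eps.

Definition orbit_dist (x y : X) (n : nat) : R := d (Nat.iter n f x) (Nat.iter n f y).

Definition syndetic (A : nat -> Prop) : Prop :=
  forall B : nat -> Prop,
    (forall L : nat, exists m, forall k, (k < L)%nat -> B (m + k)%nat) ->
    exists n, A n /\ B n.

Definition Asy (x y : X) : Prop :=
  forall eps, eps > 0 -> exists N, forall n, (n >= N)%nat -> orbit_dist x y n < eps.

Definition SProx (x y : X) : Prop :=
  forall eta, eta > 0 -> syndetic (fun n => orbit_dist x y n < eta).

Definition limsup_ge (x y : X) (delta : R) : Prop :=
  forall eps, eps > 0 -> forall N, exists n, (n >= N)%nat /\ orbit_dist x y n > delta - eps.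

Definition synd_scrambled (delta : R) (T : X -> Prop) : Prop :=
  (exists x y, T x /\ T y /\ x <> y) /\
  forall x y, T x -> T y -> x <> y ->
    SProx x y /\ ~ Asy x y /\ limsup_ge x y delta.

End Defs.
Arguments is_metric {X}. Arguments is_open {X}. Arguments compact_set {X}. Arguments compact_space {X}. Arguments dense {X}. Arguments connected_set {X}. Arguments totally_disconnected {X}. Arguments perfect_set {X}. Arguments cantor_set {X}. Arguments mycielski_set {X}. Arguments continuous_map {X}. Arguments orbit_dist {X}. Arguments Asy {X}. Arguments SProx {X}. Arguments limsup_ge {X}. Arguments synd_scrambled {X}.

(* Main.v *)
Require Import Defs.
From Stdlib Require Import Reals List.
From Stdlib Require Import Lia Lra Classical ClassicalEpsilon Cantor.
Import ListNotations.
Open Scope R_scope.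

Lemma INRS_pos (n : nat) : 0 < INR (S n).
Proof. apply lt_0_INR; lia. Qed.

Lemma inv_small (e : R) : e > 0 -> exists N, forall n, (N <= n)%nat -> / INR (S n) < e.
Proof.
  intros He. destruct (INR_unbounded (/ e)) as [N HN]. exists N. intros n Hn.
  assert (H1 : INR N <= INR (S n)) by (apply le_INR; lia).
  assert (H2 := INRS_pos n).
  assert (H3 : 0 < / e) by (apply Rinv_0_lt_compat; lra).
  replace e with (/ / e) by (field; lra).
  apply Rinv_lt_contravar. apply Rmult_lt_0_compat; lra. lra.
Qed.

Lemma inv_anti (m n : nat) : (m <= n)%nat -> / INR (S n) <= / INR (S m).
Proof.
  intros H. apply Rinv_le_contravar. apply INRS_pos. apply le_INR; lia.
Qed.

Section Main.
Variable X : Type.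
Variable d : X -> X -> R.
Variable f : X -> X.
Hypothesis Hd : is_metric d.
Hypothesis Hf : continuous_map d f.
Variable eps : R.
Hypothesis Heps : eps > 0.

Lemma d_pos x y : 0 <= d x y. Proof. apply Hd. Qed.
Lemma d_refl x : d x x = 0. Proof. apply Hd; reflexivity. Qed.
Lemma d_sym x y : d x y = d y x. Proof. apply Hd. Qed.
Lemma d_tri x y z : d x z <= d x y + d y z. Proof. apply Hd. Qed.
Lemma d_eq x y : d x y = 0 -> x = y. Proof. apply Hd. Qed.

Lemma iter_cont n : forall x e, e > 0 -> exists delta, delta > 0 /\
  forall y, d x y < delta -> d (Nat.iter n f x) (Nat.iter n f y) < e.
Proof.
  induction n as [|n IH]; intros x e He.
  - exists e. split; [lra|]. intros y Hy. exact Hy.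
  - destruct (Hf (Nat.iter n f x) e He) as [d1 [Hd1 H1]].
    destruct (IH x d1 Hd1) as [d2 [Hd2 H2]].
    exists d2. split; [lra|]. intros y Hy. simpl. apply H1, H2, Hy.
Qed.

Definition Q (s : nat) (x y : X) : Prop :=
  exists n, (n >= s)%nat /\ orbit_dist d f x y n > eps - / INR (S s).

Lemma Q_sym s x y : Q s x y -> Q s y x.
Proof.
  intros [n [H1 H2]]. exists n. split; auto. unfold orbit_dist in *. rewrite d_sym. exact H2.
Qed.

Lemma Q_down k s x y : Q (k + s) x y -> Q s x y.
Proof.
  intros [n [H1 H2]]. exists n. split; [lia|].
  assert (H := inv_anti s (k + s) ltac:(lia)). lra.
Qed.

Lemma Q_limsup x y : (forall s, Q s x y) -> limsup_ge d f x y eps.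
Proof.
  intros HQ e He N. destruct (inv_small e He) as [M HM].
  destruct (HQ (Nat.max M N)) as [n [H1 H2]]. exists n. split; [lia|].
  assert (H3 := HM (Nat.max M N) ltac:(lia)). lra.
Qed.

Lemma Q_irrefl s x : / INR (S s) <= eps -> ~ Q s x x.
Proof.
  intros H [n [H1 H2]]. unfold orbit_dist in H2. rewrite d_refl in H2. lra.
Qed.

Lemma key (C : X -> Prop) (HC : synd_scrambled d f (3 * eps) C) s x y1 y2 :
  C y1 -> C y2 -> y1 <> y2 -> Q s x y1 \/ Q s x y2.
Proof.
  intros C1 C2 Hne. apply NNPP. intros Hn.
  apply not_or_and in Hn. destruct Hn as [N1 N2].
  destruct HC as [_ HC]. destruct (HC y1 y2 C1 C2 Hne) as [_ [_ HL]].
  destruct (HL eps Heps s) as [n [Hn Hgt]].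
  assert (A1 : orbit_dist d f x y1 n <= eps - / INR (S s)).
  { apply Rnot_gt_le. intros G. apply N1. exists n. split; auto. }
  assert (A2 : orbit_dist d f x y2 n <= eps - / INR (S s)).
  { apply Rnot_gt_le. intros G. apply N2. exists n. split; auto. }
  unfold orbit_dist in *.
  assert (T := d_tri (Nat.iter n f y1) (Nat.iter n f x) (Nat.iter n f y2)).
  rewrite (d_sym (Nat.iter n f y1) (Nat.iter n f x)) in T.
  assert (P := INRS_pos s). assert (0 < / INR (S s)) by (apply Rinv_0_lt_compat; lra).
  lra.
Qed.

Lemma Q_shrink s x y : Q s x y -> exists delta, delta > 0 /\
  forall x' y', d x x' <= delta -> d y y' <= delta -> Q s x' y'.
Proof.
  intros [n [Hn Hg]]. unfold orbit_dist in Hg.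
  set (g := d (Nat.iter n f x) (Nat.iter n f y) - (eps - / INR (S s))).
  assert (Hg0 : g > 0) by (unfold g; lra).
  destruct (iter_cont n x (g/2) ltac:(lra)) as [d1 [Hd1 H1]].
  destruct (iter_cont n y (g/2) ltac:(lra)) as [d2 [Hd2 H2]].
  exists (Rmin d1 d2 / 2). split.
  { assert (Rmin d1 d2 > 0) by (apply Rmin_Rgt_r; lra). lra. }
  intros x' y' Hx Hy.
  assert (M1 := Rmin_l d1 d2). assert (M2 := Rmin_r d1 d2).
  assert (Rmin d1 d2 > 0) by (apply Rmin_Rgt_r; lra).
  assert (E1 := H1 x' ltac:(lra)). assert (E2 := H2 y' ltac:(lra)).
  exists n. split; auto. unfold orbit_dist.
  assert (T1 := d_tri (Nat.iter n f x) (Nat.iter n f x') (Nat.iter n f y)).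
  assert (T2 := d_tri (Nat.iter n f x') (Nat.iter n f y') (Nat.iter n f y)).
  rewrite (d_sym (Nat.iter n f y')) in T2.
  unfold g in *. lra.
Qed.


Variable Cs : nat -> X -> Prop.
Hypothesis HCc : forall n, cantor_set d (Cs n).
Hypothesis HCs : forall n, synd_scrambled d f (3 * eps) (Cs n).

Definition piece := (X * R)%type.
Definition inball (p : piece) x := d (fst p) x <= snd p.
Definition sub (p' p : piece) := 0 < snd p' /\ d (fst p) (fst p') + snd p' <= snd p.
Definition idx := (nat * list bool)%type.
Definition valid (P : idx -> piece) := forall i, Cs (fst i) (fst (P i)) /\ 0 < snd (P i).
Definition leP (P' P : idx -> piece) := forall i, sub (P' i) (P i).
Definition OKp s (p q : piece) := forall x y, inball p x -> inball q y -> Q s x y.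

Lemma sub_incl p' p x : sub p' p -> inball p' x -> inball p x.
Proof.
  unfold sub, inball. intros [H1 H2] H3.
  assert (T := d_tri (fst p) (fst p') x). lra.
Qed.

Lemma sub_refl p : 0 < snd p -> sub p p.
Proof. unfold sub. intros H. rewrite d_refl. lra. Qed.

Lemma sub_trans p'' p' p : sub p'' p' -> sub p' p -> sub p'' p.
Proof.
  unfold sub. intros [H1 H2] [H3 H4]. split; auto.
  assert (T := d_tri (fst p) (fst p') (fst p'')). lra.
Qed.

Lemma sub_rad p' p : sub p' p -> snd p' <= snd p.
Proof. unfold sub. intros [H1 H2]. assert (T := d_pos (fst p) (fst p')). lra. Qed.

Lemma inball_center p : 0 <= snd p -> inball p (fst p).
Proof. unfold inball. rewrite d_refl. auto. Qed.

Lemma OKp_mono s p' p q' q : sub p' p -> sub q' q -> OKp s p q -> OKp s p' q'.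
Proof.
  unfold OKp. intros H1 H2 H x y Hx Hy. apply H; eapply sub_incl; eauto.
Qed.

Lemma OKp_sym s p q : OKp s p q -> OKp s q p.
Proof. unfold OKp. intros H x y Hx Hy. apply Q_sym, H; auto. Qed.

Lemma pair_lemma s a b (p q : piece) :
  Cs a (fst p) -> 0 < snd p -> Cs b (fst q) -> 0 < snd q ->
  exists p' q', Cs a (fst p') /\ Cs b (fst q') /\ sub p' p /\ sub q' q /\ OKp s p' q'.
Proof.
  destruct p as [c1 r1], q as [c2 r2]; simpl. intros H1 Hr1 H2 Hr2.
  destruct (HCc b) as [_ [_ [Hperf _]]].
  destruct (Hperf c2 H2 (r2/2) ltac:(lra)) as [y2 [Hy2 [Hne Hdy2]]].
  assert (Hy : exists y, Cs b y /\ d c2 y < r2 / 2 /\ Q s c1 y).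
  { destruct (key (Cs b) (HCs b) s c1 y2 c2 Hy2 H2 Hne) as [HQ|HQ].
    - exists y2. auto.
    - exists c2. rewrite d_refl. repeat split; auto; lra. }
  destruct Hy as [y [Hyb [Hdy HQ]]].
  destruct (Q_shrink s c1 y HQ) as [del [Hdel Hsh]].
  exists (c1, Rmin del r1), (y, Rmin del (r2/2)). simpl.
  assert (M1 := Rmin_l del r1). assert (M2 := Rmin_r del r1).
  assert (M3 := Rmin_l del (r2/2)). assert (M4 := Rmin_r del (r2/2)).
  assert (Rmin del r1 > 0) by (apply Rmin_Rgt_r; lra).
  assert (Rmin del (r2/2) > 0) by (apply Rmin_Rgt_r; lra).
  repeat split; simpl; auto.
  - rewrite d_refl. lra.
  - lra.
  - unfold OKp, inball; simpl. intros x y' Hx Hy'. apply Hsh; lra.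
Qed.

Definition idx_eq_dec (i j : idx) : {i = j} + {i <> j}.
Proof. decide equality. apply (list_eq_dec Bool.bool_dec). apply Nat.eq_dec. Defined.

Definition upd (P : idx -> piece) (i : idx) (p : piece) : idx -> piece :=
  fun j => if idx_eq_dec j i then p else P j.

Lemma refine_one s a M : forall P, valid P -> exists P', valid P' /\ leP P' P /\
  forall j, In j M -> j <> a -> OKp s (P' a) (P' j).
Proof.
  induction M as [|j M IH]; intros P HP.
  - exists P. split; auto. split. intros i. apply sub_refl, HP. intros j [].
  - destruct (IH P HP) as [P1 [HP1 [Hle1 HOK1]]].
    destruct (idx_eq_dec j a) as [E|E].
    + exists P1. split; [exact HP1|]. split; [exact Hle1|]. intros j' [<-|Hin] Hne; [congruence|]. auto.
    + destruct (HP1 a) as [Ca ra]. destruct (HP1 j) as [Cj rj].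
      destruct (pair_lemma s _ _ _ _ Ca ra Cj rj) as [p' [q' [Cp [Cq [Sp [Sq Hok]]]]]].
      set (P' := upd (upd P1 a p') j q').
      assert (Ea : P' a = p').
      { unfold P', upd. destruct (idx_eq_dec a j); [congruence|].
        destruct (idx_eq_dec a a); congruence. }
      assert (Ej : P' j = q').
      { unfold P', upd. destruct (idx_eq_dec j j); congruence. }
      assert (Hle : leP P' P1).
      { intros i. unfold P', upd. destruct (idx_eq_dec i j) as [->|]; auto.
        destruct (idx_eq_dec i a) as [->|]; auto. apply sub_refl, HP1. }
      exists P'. split; [|split].
      * intros i. split; [|apply (proj1 (Hle i))].
        unfold P', upd. destruct (idx_eq_dec i j) as [->|]; auto.
        destruct (idx_eq_dec i a) as [->|]; auto. apply HP1.
      * intros i. eapply sub_trans. apply Hle. apply Hle1.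
      * intros j' [<-|Hin] Hne.
        -- rewrite Ea, Ej. exact Hok.
        -- apply (OKp_mono s _ (P1 a) _ (P1 j')); auto.
Qed.

Lemma refine_all s L : forall P, valid P -> exists P', valid P' /\ leP P' P /\
  forall i j, In i L -> In j L -> i <> j -> OKp s (P' i) (P' j).
Proof.
  induction L as [|a L IH]; intros P HP.
  - exists P. split; auto. split. intros i. apply sub_refl, HP. intros i j [].
  - destruct (IH P HP) as [P1 [HP1 [Hle1 HOK1]]].
    destruct (refine_one s a L P1 HP1) as [P2 [HP2 [Hle2 HOK2]]].
    exists P2. split; [exact HP2|]. split.
    + intros i. eapply sub_trans; eauto.
    + intros i j [<-|Hi] [<-|Hj] Hne.
      * congruence.
      * apply HOK2; auto.
      * apply OKp_sym, HOK2; auto.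
      * apply (OKp_mono s _ (P1 i) _ (P1 j)); auto.
Qed.

Variable c0 : nat -> X.
Hypothesis Hc0 : forall n, Cs n (c0 n).

Fixpoint allb (m : nat) : list (list bool) :=
  match m with
  | O => [nil]
  | S m' => flat_map (fun sg => [false :: sg; true :: sg]) (allb m')
  end.

Lemma allb_in m : forall sg, length sg = m -> In sg (allb m).
Proof.
  induction m as [|m IH]; intros sg Hl.
  - destruct sg; simpl in *; [auto|discriminate].
  - destruct sg as [|b sg]; simpl in *; [discriminate|].
    apply in_flat_map. exists sg. split. apply IH. lia.
    destruct b; simpl; auto.
Qed.

Definition active (s : nat) : list idx :=
  flat_map (fun n => map (fun sg => (n, sg)) (allb (s - n))) (seq 0 (S s)).

Lemma in_active s n sg : (n <= s)%nat -> length sg = (s - n)%nat -> In (n, sg) (active s).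
Proof.
  intros H1 H2. unfold active. apply in_flat_map. exists n. split.
  apply in_seq. lia. apply in_map. apply allb_in. auto.
Qed.

Lemma refine_ex s L P : exists P', valid P -> valid P' /\ leP P' P /\
  forall i j, In i L -> In j L -> i <> j -> OKp s (P' i) (P' j).
Proof.
  destruct (classic (valid P)) as [HP|HP].
  - destruct (refine_all s L P HP) as [P' H]. exists P'. auto.
  - exists P. intros H. contradiction.
Qed.

Definition refineP s L P : idx -> piece :=
  proj1_sig (constructive_indefinite_description _ (refine_ex s L P)).

Lemma refineP_spec s L P : valid P -> valid (refineP s L P) /\ leP (refineP s L P) P /\
  forall i j, In i L -> In j L -> i <> j -> OKp s (refineP s L P i) (refineP s L P j).
Proof.
  unfold refineP. destruct (constructive_indefinite_description _ _) as [P' H]. simpl. auto.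
Qed.

Definition root (n : nat) : piece := (c0 n, / INR (S n)).

Definition grow (s : nat) (P : idx -> piece) : idx -> piece := fun i =>
  match snd i with
  | nil => root (fst i)
  | b :: t => (fst (P (fst i, t)), Rmin (snd (P (fst i, t))) (/ INR (S (S s))))
  end.

Fixpoint Pst (s : nat) : idx -> piece :=
  match s with
  | O => refineP 0 (active 0) (fun i => root (fst i))
  | S s' => refineP (S s') (active (S s')) (grow s' (Pst s'))
  end.

Lemma valid_root : valid (fun i => root (fst i)).
Proof. intros [n sg]. simpl. split. apply Hc0. apply Rinv_0_lt_compat, INRS_pos. Qed.

Lemma valid_grow s P : valid P -> valid (grow s P).
Proof.
  intros HP [n sg]. unfold grow. cbn [fst snd Pst length]. destruct sg as [|b t].
  - apply (valid_root (n, nil)).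
  - cbn [fst snd Pst length]. split. apply (HP (n, t)).
    apply Rmin_Rgt_r. split. apply (HP (n,t)). apply Rinv_0_lt_compat, INRS_pos.
Qed.

Lemma grow_sub s P n b t : valid P -> sub (grow s P (n, b :: t)) (P (n, t)).
Proof.
  intros HP. unfold grow, sub. cbn [fst snd Pst length]. rewrite d_refl. split.
  apply Rmin_Rgt_r. split. apply (HP (n,t)). apply Rinv_0_lt_compat, INRS_pos.
  assert (M := Rmin_l (snd (P (n, t))) (/ INR (S (S s)))). lra.
Qed.

Lemma Pst_valid s : valid (Pst s).
Proof.
  induction s as [|s IH]; cbn [fst snd Pst length].
  - apply refineP_spec, valid_root.
  - apply refineP_spec, valid_grow, IH.
Qed.

Lemma Pst_OK s i j : In i (active s) -> In j (active s) -> i <> j -> OKp s (Pst s i) (Pst s j).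
Proof.
  destruct s as [|s]; cbn [fst snd Pst length].
  - apply refineP_spec, valid_root.
  - apply refineP_spec, valid_grow, Pst_valid.
Qed.

Lemma Pst_chain s n b t : sub (Pst (S s) (n, b :: t)) (Pst s (n, t)).
Proof.
  cbn [fst snd Pst length]. eapply sub_trans.
  - apply (proj1 (proj2 (refineP_spec _ (active (S s)) _ (valid_grow s _ (Pst_valid s))))).
  - apply grow_sub, Pst_valid.
Qed.

Lemma Pst_rad s n sg : (n + length sg)%nat = s -> snd (Pst s (n, sg)) <= / INR (S s).
Proof.
  intros Hs. destruct s as [|s]; cbn [fst snd Pst length].
  - eapply Rle_trans. apply sub_rad.
    apply (proj1 (proj2 (refineP_spec _ (active 0) _ valid_root))).
    cbn [fst snd Pst length]. replace n with 0%nat by lia. apply Rle_refl.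
  - eapply Rle_trans. apply sub_rad.
    apply (proj1 (proj2 (refineP_spec _ (active (S s)) _ (valid_grow s _ (Pst_valid s))))).
    unfold grow. cbn [fst snd Pst length]. destruct sg as [|b t]; cbn [fst snd Pst length] in *.
    + replace n with (S s) by lia. apply Rle_refl.
    + apply Rmin_r.
Qed.

Definition Fset n x := forall s, (n <= s)%nat -> exists sg, length sg = (s - n)%nat /\ inball (Pst s (n, sg)) x.
Definition K n x := Cs n x /\ Fset n x.

Lemma chain_gen j : forall s n sg x, (j <= length sg)%nat ->
  inball (Pst (j + s) (n, sg)) x -> inball (Pst s (n, skipn j sg)) x.
Proof.
  induction j as [|j IH]; intros s n sg x Hl Hin.
  - exact Hin.
  - destruct sg as [|b t]; cbn [length] in Hl; [lia|].
    change (skipn (S j) (b :: t)) with (skipn j t).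
    apply IH; [lia|]. eapply sub_incl; [apply Pst_chain|]. exact Hin.
Qed.

Lemma skipn_rep j k (l : list bool) : skipn j (repeat false (j + k) ++ l) = repeat false k ++ l.
Proof. induction j as [|j IH]; simpl; auto. Qed.

Lemma branch_chain j k t n sg x :
  inball (Pst ((j + k) + t) (n, repeat false (j + k) ++ sg)) x ->
  inball (Pst (k + t) (n, repeat false k ++ sg)) x.
Proof.
  intros H. rewrite <- (skipn_rep j k sg). apply chain_gen.
  rewrite length_app, repeat_length. lia.
  rewrite <- Nat.add_assoc in H. exact H.
Qed.

Lemma ball_compl_open (p : piece) x : snd p < d (fst p) x ->
  exists rho, rho > 0 /\ forall y, d x y < rho -> snd p < d (fst p) y.
Proof.
  intros H. exists (d (fst p) x - snd p). split; [lra|]. intros y Hy.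
  assert (T := d_tri (fst p) y x). rewrite (d_sym y x) in T. lra.
Qed.

Lemma branch_point t n sg : exists z, Cs n z /\
  forall k, inball (Pst (k + t) (n, repeat false k ++ sg)) z.
Proof.
  apply NNPP. intros H.
  destruct (HCc n) as [_ [Hcomp _]].
  destruct (Hcomp nat (fun k x => snd (Pst (k + t) (n, repeat false k ++ sg)) <
                                  d (fst (Pst (k + t) (n, repeat false k ++ sg))) x)) as [l Hl].
  - intros k x Hx. apply ball_compl_open. exact Hx.
  - intros x Hx. apply NNPP. intros H2. apply H. exists x. split; auto.
    intros k. unfold inball. apply Rnot_lt_le. intros H3. apply H2. exists k. exact H3.
  - set (M := list_max l).
    set (c := fst (Pst (M + t) (n, repeat false M ++ sg))).
    assert (Hc : Cs n c) by (apply (Pst_valid (M + t) (n, repeat false M ++ sg))).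
    destruct (Hl c Hc) as [i [Hi Hu]].
    assert (HiM : (i <= M)%nat).
    { assert (A := proj1 (list_max_le l M) (le_n _)). rewrite Forall_forall in A. auto. }
    assert (Hb : inball (Pst (M + t) (n, repeat false M ++ sg)) c).
    { apply inball_center. left. apply (Pst_valid (M + t) (n, repeat false M ++ sg)). }
    replace M with ((M - i) + i)%nat in Hb by lia.
    apply branch_chain in Hb. unfold inball in Hb. lra.
Qed.

Lemma branch_in_K t n sg z : (n <= t)%nat -> length sg = (t - n)%nat ->
  (forall k, inball (Pst (k + t) (n, repeat false k ++ sg)) z) -> Fset n z.
Proof.
  intros Hnt Hl Hz s Hs.
  destruct (Nat.le_gt_cases t s) as [Hts|Hts].
  - exists (repeat false (s - t) ++ sg). split.
    + rewrite length_app, repeat_length. lia.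
    + replace s with ((s - t) + t)%nat at 1 by lia. apply Hz.
  - exists (skipn (t - s) sg). split.
    + rewrite length_skipn. lia.
    + apply chain_gen. lia. replace (t - s + s)%nat with t by lia.
      exact (Hz 0%nat).
Qed.

Lemma K_nonempty_in t n sg : (n <= t)%nat -> length sg = (t - n)%nat ->
  exists z, K n z /\ inball (Pst t (n, sg)) z.
Proof.
  intros H1 H2. destruct (branch_point t n sg) as [z [Hz1 Hz2]].
  exists z. split. split; auto. eapply branch_in_K; eauto. exact (Hz2 0%nat).
Qed.

Lemma list_open (p : list bool -> piece) x : forall L,
  (forall sg, In sg L -> snd (p sg) < d (fst (p sg)) x) ->
  exists rho, rho > 0 /\ forall y, d x y < rho -> forall sg, In sg L -> snd (p sg) < d (fst (p sg)) y.
Proof.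
  induction L as [|a L IH]; intros H.
  - exists 1. split; [lra|]. intros y _ sg [].
  - destruct IH as [r1 [Hr1 H1]]. { intros sg Hin. apply H. right. auto. }
    destruct (ball_compl_open (p a) x (H a (or_introl eq_refl))) as [r2 [Hr2 H2]].
    exists (Rmin r1 r2). split. apply Rmin_Rgt_r; lra.
    intros y Hy sg [<-|Hin].
    + apply H2. assert (A := Rmin_r r1 r2). lra.
    + apply H1; auto. assert (A := Rmin_l r1 r2). lra.
Qed.

Lemma Fset_compl_open n x : ~ Fset n x ->
  exists rho, rho > 0 /\ forall y, d x y < rho -> ~ Fset n y.
Proof.
  intros Hx.
  assert (E : exists s, (n <= s)%nat /\ forall sg, length sg = (s - n)%nat -> ~ inball (Pst s (n, sg)) x).
  { apply NNPP. intros H'. apply Hx. intros s Hs. apply NNPP. intros H2. apply H'.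
    exists s. split; auto. intros sg Hl Hin. apply H2. exists sg. auto. }
  destruct E as [s [Hs Hall]].
  destruct (list_open (fun sg => Pst s (n, sg)) x (allb (s - n))) as [rho [Hrho Hy]].
  { intros sg Hin. apply Rnot_le_lt. apply Hall.
    clear -Hin. revert sg Hin. induction (s - n)%nat as [|m IH]; intros sg Hin.
    - destruct Hin as [<-|[]]. reflexivity.
    - apply in_flat_map in Hin. destruct Hin as [t [Ht Hin]].
      destruct Hin as [<-|[<-|[]]]; simpl; f_equal; auto. }
  exists rho. split; auto. intros y Hxy HF.
  destruct (HF s Hs) as [sg [Hl Hin]].
  assert (A := Hy y Hxy sg (allb_in _ sg Hl)). unfold inball in Hin. lra.
Qed.

Lemma K_compact n : compact_set d (K n).
Proof.
  intros I U HU Hcov.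
  destruct (HCc n) as [_ [Hcomp _]].
  destruct (Hcomp (option I) (fun o x => match o with Some i => U i x | None => ~ Fset n x end)) as [l Hl].
  - intros [i|]. apply HU. intros x Hx. destruct (Fset_compl_open n x Hx) as [r [Hr H]].
    exists r. split; auto.
  - intros x Hx. destruct (classic (Fset n x)) as [HF|HF].
    + destruct (Hcov x (conj Hx HF)) as [i Hi]. exists (Some i). exact Hi.
    + exists None. exact HF.
  - exists (flat_map (fun o => match o with Some i => [i] | None => [] end) l).
    intros x [Hx HF]. destruct (Hl x Hx) as [[i|] [Hin Hi]].
    + exists i. split; auto. apply in_flat_map. exists (Some i). split; auto. left; auto.
    + contradiction.
Qed.

Lemma two_balls p x y : inball p x -> inball p y -> d x y <= 2 * snd p.
Proof.
  unfold inball. intros H1 H2. assert (T := d_tri x (fst p) y).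
  rewrite (d_sym x (fst p)) in T. lra.
Qed.

Lemma K_perfect n : perfect_set d (K n).
Proof.
  intros x [Hx HF] r Hr.
  destruct (inv_small (Rmin (r/2) eps) ltac:(apply Rmin_Rgt_r; lra)) as [N HN].
  set (s := Nat.max N n).
  assert (Hs : / INR (S s) < Rmin (r/2) eps) by (apply HN; lia).
  assert (M1 := Rmin_l (r/2) eps). assert (M2 := Rmin_r (r/2) eps).
  destruct (HF s ltac:(lia)) as [sg [Hl Hin]].
  assert (Hz : forall b, exists z, K n z /\ inball (Pst s (n, sg)) z /\ inball (Pst (S s) (n, b :: sg)) z).
  { intros b. destruct (K_nonempty_in (S s) n (b :: sg)) as [z [Hz1 Hz2]].
    lia. cbn [length]. lia. exists z. split; auto. split; auto.
    eapply sub_incl; [apply Pst_chain|]. exact Hz2. }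
  destruct (Hz false) as [z0 [K0 [B0 C0]]]. destruct (Hz true) as [z1 [K1 [B1 C1]]].
  assert (Hne : z0 <> z1).
  { intros E. subst z1.
    assert (HQ := Pst_OK (S s) (n, false :: sg) (n, true :: sg)).
    apply (Q_irrefl (S s) z0).
    - assert (A := inv_anti s (S s) ltac:(lia)). lra.
    - apply HQ; auto; try (apply in_active; cbn [length]; lia). congruence. }
  assert (Hrad := Pst_rad s n sg ltac:(lia)).
  destruct (classic (z0 = x)) as [E|E].
  - exists z1. split; auto. split. congruence.
    assert (A := two_balls _ _ _ Hin B1). lra.
  - exists z0. split; auto. split. auto.
    assert (A := two_balls _ _ _ Hin B0). lra.
Qed.

Lemma K_cantor n : cantor_set d (K n).
Proof.
  split; [|split; [|split]].
  - destruct (K_nonempty_in n n nil) as [z [Hz _]]; auto. cbn [length]; lia.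
    exists z; auto.
  - apply K_compact.
  - apply K_perfect.
  - intros A HA. destruct (HCc n) as [_ [_ [_ Htd]]]. apply Htd.
    intros x Hx. apply HA, Hx.
Qed.

Lemma K_good a b x y : K a x -> K b y -> x <> y -> forall s, Q s x y.
Proof.
  intros [Hx HFx] [Hy HFy] Hne s'.
  assert (Hpos : d x y > 0).
  { destruct (d_pos x y) as [H|H]; auto. exfalso. apply Hne, d_eq. auto. }
  destruct (inv_small (d x y / 2) ltac:(lra)) as [N HN].
  set (s := Nat.max (Nat.max a b) (Nat.max N s')).
  destruct (HFx s ltac:(lia)) as [sx [Hlx Hinx]].
  destruct (HFy s ltac:(lia)) as [sy [Hly Hiny]].
  apply (Q_down (s - s') s'). replace (s - s' + s')%nat with s by lia.
  destruct (idx_eq_dec (a, sx) (b, sy)) as [E|E].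
  - exfalso. injection E as <- <-.
    assert (A := two_balls _ _ _ Hinx Hiny).
    assert (B := Pst_rad s a sx ltac:(lia)).
    assert (C := HN s ltac:(lia)). lra.
  - apply (Pst_OK s (a, sx) (b, sy)); auto; apply in_active; lia.
Qed.

End Main.

Theorem proposition3p13 (X : Type) (d : X -> X -> R) (f : X -> X)
  (Hd : is_metric d) (Hc : compact_space d) (Hf : continuous_map d f)
  (eps : R) (S : X -> Prop) (Heps : eps > 0)
  (HSdense : dense d S) (HSmyc : mycielski_set d S)
  (Hprox : forall x y, S x -> S y -> SProx d f x y)
  (HW : forall W, is_open d W -> (exists x, W x) ->
        exists C, cantor_set d C /\ (forall x, C x -> S x /\ W x) /\
                  synd_scrambled d f (3 * eps) C) :
  exists T, (forall x, T x -> S x) /\ dense d T /\ mycielski_set d T /\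
            synd_scrambled d f eps T.
Proof.
  assert (Hex : exists x : X, True).
  { destruct HSmyc as [C0 [HC0 _]]. destruct (HC0 0%nat) as [[x _] _]. exists x; auto. }
  pose (x0 := proj1_sig (constructive_indefinite_description _ Hex)).
  assert (ball_open : forall c r, is_open d (fun y => d c y < r)).
  { intros c r y Hy. exists (r - d c y). split; [lra|]. intros z Hz.
    assert (T := d_tri X d Hd c y z). lra. }
  assert (Hnet : forall k : nat, exists l : list X, forall y, exists c, In c l /\ d c y < / INR (Datatypes.S k)).
  { intros k. destruct (Hc X (fun c y => d c y < / INR (Datatypes.S k))) as [l Hl].
    - intros c. apply ball_open.
    - intros x _. exists x. rewrite (d_refl X d Hd). apply Rinv_0_lt_compat, INRS_pos.
    - exists l. intros y. destruct (Hl y I) as [c Hc']. exists c. exact Hc'. }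
  set (net := fun k => proj1_sig (constructive_indefinite_description _ (Hnet k))).
  assert (Hnet' : forall k y, exists c, In c (net k) /\ d c y < / INR (Datatypes.S k)).
  { intros k. exact (proj2_sig (constructive_indefinite_description _ (Hnet k))). }
  set (ctr := fun m : nat => nth (snd (of_nat m)) (net (fst (of_nat m))) x0).
  set (rad := fun m : nat => / INR (Datatypes.S (fst (of_nat m)))).
  set (W := fun m y => d (ctr m) y < rad m).
  assert (HWm : forall m, exists C, cantor_set d C /\ (forall x, C x -> S x /\ W m x) /\
                  synd_scrambled d f (3 * eps) C).
  { intros m. apply HW. apply ball_open. exists (ctr m). unfold W, rad.
    rewrite (d_refl X d Hd). apply Rinv_0_lt_compat, INRS_pos. }
  set (Cs := fun m => proj1_sig (constructive_indefinite_description _ (HWm m))).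
  assert (HCs : forall m, cantor_set d (Cs m) /\ (forall x, Cs m x -> S x /\ W m x) /\
                  synd_scrambled d f (3 * eps) (Cs m)).
  { intros m. exact (proj2_sig (constructive_indefinite_description _ (HWm m))). }
  assert (HCc : forall n, cantor_set d (Cs n)) by (intros n; apply HCs).
  assert (HCsc : forall n, synd_scrambled d f (3 * eps) (Cs n)) by (intros n; apply HCs).
  assert (Hc0e : forall n, exists x, Cs n x) by (intros n; apply HCc).
  set (c0 := fun n => proj1_sig (constructive_indefinite_description _ (Hc0e n))).
  assert (Hc0 : forall n, Cs n (c0 n)).
  { intros n. exact (proj2_sig (constructive_indefinite_description _ (Hc0e n))). }
  set (KK := K X d f Hd Hf eps Heps Cs HCc HCsc c0).
  assert (KKc : forall n, cantor_set d (KK n)) by (intros n; apply K_cantor; auto).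
  assert (KKsub : forall n x, KK n x -> Cs n x) by (intros n x [H _]; exact H).
  assert (KKgood : forall a b x y, KK a x -> KK b y -> x <> y -> limsup_ge d f x y eps).
  { intros a b x y Ha Hb Hne. apply Q_limsup. eapply K_good; eauto. }
  exists (fun x => exists n, KK n x). split; [|split; [|split]].
  - intros x [n Hn]. apply (HCs n), KKsub, Hn.
  - intros V HV [x Hx]. destruct (HV x Hx) as [rho [Hrho Hball]].
    destruct (inv_small (rho / 2) ltac:(lra)) as [k Hk].
    destruct (Hnet' k x) as [c [Hin Hcx]].
    destruct (In_nth _ _ x0 Hin) as [i [_ Hi]].
    set (m := to_nat (k, i)).
    assert (Hm : of_nat m = (k, i)) by apply cancel_of_to.
    destruct (KKc m) as [[z Hz] _].
    destruct (proj1 (proj2 (HCs m)) z (KKsub m z Hz)) as [_ Hzw].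
    exists z. split; [|exists m; exact Hz].
    apply Hball. unfold W, ctr, rad in Hzw. rewrite Hm in Hzw. cbn [fst snd] in Hzw.
    rewrite Hi in Hzw. assert (A := Hk k (le_n _)).
    assert (T := d_tri X d Hd x c z). rewrite (d_sym X d Hd x c) in T. lra.
  - exists KK. split; auto. intros x; split; auto.
  - split.
    + destruct (KKc 0%nat) as [[z Hz] [_ [Hp _]]].
      destruct (Hp z Hz 1 ltac:(lra)) as [y [Hy [Hne _]]].
      exists y, z. repeat split; eauto.
    + intros x y [a Ha] [b Hb] Hne.
      assert (HL := KKgood a b x y Ha Hb Hne).
      split; [|split; auto].
      * apply Hprox; [apply (HCs a), KKsub, Ha | apply (HCs b), KKsub, Hb].
      * intros Hasy. destruct (Hasy (eps/2) ltac:(lra)) as [N HN].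
        destruct (HL (eps/2) ltac:(lra) N) as [n [Hn Hg]].
        assert (A := HN n Hn). lra.
Qed.
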